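(* Let $\alpha_1,\alpha_2,\tau\ge0$. Let $\mathcal H$ be an $n$-vertex linear hypergraph in which every edge has size at least $1+\alpha_2$. Let $e\in\mathcal H$, $r:=|e|$, $m_1 := |\{f\in N(e): |f|\ge(1+\alpha_1)r\}|$ and $m_2 := |\{f\in N(e): (1+\alpha_1)r>|f|\ge r/(1+\alpha_2)\}|$. If $r>1+\alpha_2$, then (i) $(1+\alpha_1)m_1 + \frac{m_2}{1+\alpha_2} \le n + \frac{(1+\alpha_2)n}{r-1-\alpha_2}$. Moreover, if in addition $m_1+m_2\ge(1-\tau)n$ and $\alpha_1>0$, then (ii) $m_1 \le \left(\tau + \frac{(1+\alpha_2)(1+\alpha_2 r)}{r-1-\alpha_2}\right)\frac{n}{\alpha_1}$.
   Context: A hypergraph has a finite vertex set and a set of nonempty edges; linear means any two distinct edges share at most one vertex. $N(e)$ denotes the set of edges $f\ne e$ with $f\cap e\ne\varnothing$. *)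

(* Defs.v *)
From HB Require Import structures.
From mathcomp Require Import all_boot all_order all_algebra.
Set Implicit Arguments. Unset Strict Implicit. Unset Printing Implicit Defensive.

Definition hypergraph (V : finType) (E : {set {set V}}) : Prop :=
  forall e, e \in E -> e != set0.

Definition linear_hypergraph (V : finType) (E : {set {set V}}) : Prop :=
  hypergraph E /\
  forall e f, e \in E -> f \in E -> e != f -> #|e :&: f| <= 1.

Definition nbhd (V : finType) (E : {set {set V}}) (e : {set V}) : {set {set V}} :=
  [set f in E | (f != e) && (f :&: e != set0)].

(* Main.v *)
Require Import Defs.
From HB Require Import structures.
From mathcomp Require Import all_boot all_order all_algebra.
From mathcomp Require Import ring lra.
Import Order.TTheory GRing.Theory Num.Theory.

Lemma pick_nb (V : finType) (e f : {set V}) : f :&: e != set0 ->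
  exists v, [pick v in f :&: e] = Some v /\ v \in f /\ v \in e.
Proof.
move=> /set0Pn [w Hw].
case: pickP => [v Hv|H]; last by move: (H w); rewrite Hw.
by exists v; move: Hv; rewrite inE => /andP[].
Qed.

Arguments pick_nb {V e f}.
Lemma key (V : finType) (E : {set {set V}}) e : linear_hypergraph E ->
  \sum_(f in nbhd E e) #|f :\: e| <= #|e| * #|V|.
Proof.
move=> [_ lin].
set N := nbhd E e.
pose P := [set p : {set V} * V | (p.1 \in N) && (p.2 \in p.1 :\: e)].
have ->: \sum_(f in N) #|f :\: e| = #|P|.
  rewrite -sum1_card.
  rewrite (eq_bigr (fun f => \sum_(x in f :\: e) 1)); last by move=> f _; rewrite sum1_card.
  rewrite pair_big_dep; apply: eq_bigl => -[f x]; by rewrite !inE.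
pose h (p : {set V} * V) := (odflt p.2 [pick v in p.1 :&: e], p.2).
have injh : {in P &, injective h}.
  move=> [f x] [g y]; rewrite /P !in_set /= => /andP[fN /andP[xe xf]] /andP[gN /andP[ye yg]].
  move: fN gN => /and3P[fE _ fN] /and3P[gE _ gN].
  have [v [pv [vf ve]]] := pick_nb fN.
  have [w [pw [wg we]]] := pick_nb gN.
  rewrite /h /= pv pw /= => -[vw xy]; subst w y.
  case: (eqVneq f g) => [-> //|fg].
  have := lin f g fE gE fg.
  have sub : [set v; x] \subset f :&: g.
    by apply/subsetP => z; rewrite !inE => /orP[] /eqP ->; rewrite ?vf ?wg ?xf ?xg.
  have := subset_leq_card sub.
  rewrite cards2.
  have -> : (v != x) by apply/eqP => vx; move: xe; rewrite -vx ve.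
  move=> H1 H2; have := leq_trans H1 H2; by [].
rewrite -(card_in_imset injh).
have sub : h @: P \subset setX e [set: V].
  apply/subsetP => q /imsetP [[f x] Hp ->]; move: Hp; rewrite !inE /= => /andP[/and3P[_ _ fN] _].
  have [v [pv [vf ve]]] := pick_nb fN.
  by rewrite /h /= pv /= ve.
by apply: leq_trans (subset_leq_card sub) _; rewrite cardsX cardsT.
Qed.
Local Open Scope ring_scope.

Lemma split_sum (R : numFieldType) (T : finType) (N : {set T}) (p1 p2 : pred T) (x y : R) :
  (forall f, p2 f -> ~~ p1 f) ->
  \sum_(f in N) (if p1 f then x else if p2 f then y else 0) =
  x * #|[set f in N | p1 f]|%:R + y * #|[set f in N | p2 f]|%:R.
Proof.
move=> H.
rewrite (bigID p1) /=; congr (_ + _).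
  rewrite (eq_bigr (fun=> x)); last by move=> f /andP[_ ->].
  rewrite (eq_bigl (fun f => f \in [set f in N | p1 f])); last by move=> f; rewrite inE.
  by rewrite sumr_const mulr_natr.
rewrite (bigID p2) /= [X in _ + X]big1 ?addr0; last by move=> f /andP[/andP[_ /negbTE ->] /negbTE ->].
rewrite (eq_bigr (fun=> y)); last by move=> f /andP[/andP[_ /negbTE ->] ->].
rewrite (eq_bigl (fun f => f \in [set f in N | p2 f])); last first.
  move=> f; rewrite inE; case p2f: (p2 f); last by rewrite !andbF.
  by rewrite (H _ p2f) !andbT.
by rewrite sumr_const mulr_natr.
Qed.

Theorem proposition6p3 (R : realFieldType) (V : finType) (E : {set {set V}})
    (a1 a2 tau : R) (e : {set V}) :
  0 <= a1 -> 0 <= a2 -> 0 <= tau ->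
  linear_hypergraph E ->
  (forall f, f \in E -> 1 + a2 <= (#|f|%:R : R)) ->
  e \in E ->
  let n : R := #|V|%:R in
  let r : R := #|e|%:R in
  let m1 : R := #|[set f in nbhd E e | (1 + a1) * r <= #|f|%:R]|%:R in
  let m2 : R := #|[set f in nbhd E e |
                   (#|f|%:R < (1 + a1) * r) && (r / (1 + a2) <= #|f|%:R)]|%:R in
  1 + a2 < r ->
  ((1 + a1) * m1 + m2 / (1 + a2) <= n + (1 + a2) * n / (r - 1 - a2)) /\
  ((1 - tau) * n <= m1 + m2 -> 0 < a1 ->
   m1 <= (tau + (1 + a2) * (1 + a2 * r) / (r - 1 - a2)) * (n / a1)).
Proof.
move=> ha1 ha2 htau lin Esz eE n r m1 m2 hr.
have lin' := lin; move: lin' => [_ linf].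
set N := nbhd E e.
pose p1 := fun f : {set V} => (1 + a1) * r <= #|f|%:R.
pose p2 := fun f : {set V} => (#|f|%:R < (1 + a1) * r) && (r / (1 + a2) <= #|f|%:R).
pose c := fun f : {set V} => (#|f :\: e|%:R : R).
set D := r - 1 - a2.
have hD : 0 < D by rewrite /D; lra.
have ha2p : 0 < 1 + a2 by lra.
have hS : \sum_(f in N) c f <= r * n.
  by rewrite /c -natr_sum /r /n -natrM ler_nat key.
have hc : forall f, f \in N -> #|f|%:R <= 1 + c f.
  move=> f; rewrite inE => /and3P[fE fe _].
  have := linf f e fE eE fe; rewrite /c -(cardsID e f) natrD.
  rewrite -(ler_nat R) => h; lra.
have hc0 : forall f, 0 <= c f by move=> f; rewrite /c ler0n.
have hQ : forall f, f \in N -> r / (1 + a2) <= #|f|%:R -> D <= (1 + a2) * c f.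
  move=> f fN; rewrite ler_pdivrMr // => h.
  have := hc f fN; rewrite /D; nra.
have hP1Q : forall f, p1 f -> r / (1 + a2) <= #|f|%:R.
  move=> f; rewrite /p1 => h; apply: le_trans h.
  rewrite ler_pdivrMr //.
  have : 0 <= (a1 + a2 + a1 * a2) * r by rewrite mulr_ge0 // ?addr_ge0 ?mulr_ge0 //; lra.
  nra.
have p21 : forall f, p2 f -> ~~ p1 f by move=> f /andP[h _]; rewrite /p1 -ltNge.
have H1 : (1 + a1) * D * m1 + D / (1 + a2) * m2 <= r * n.
  apply: le_trans hS; rewrite /m1 /m2 -/N -(@split_sum _ _ N _ _ _ _ p21).
  apply: ler_sum => f fN; case: ifP => h1.
    have := hc f fN; move: h1; rewrite /p1 /D => h1 h2; nra.
  case: ifP => [/andP[_ h2]|_] //.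
  rewrite ler_pdivrMr // mulrC; exact: hQ.
have H2 : D * m1 + D * m2 <= (1 + a2) * (r * n).
  apply: le_trans (ler_wpM2l (ltW ha2p) hS); rewrite /m1 /m2 -/N -(@split_sum _ _ N _ _ _ _ p21).
  rewrite mulr_sumr; apply: ler_sum => f fN; case: ifP => h1.
    by apply: hQ => //; apply: hP1Q.
  case: ifP => [/andP[_ h2]|_]; first exact: hQ.
  by rewrite mulr_ge0 // ltW.
have hm1 : 0 <= m1 by rewrite ler0n.
have hm2 : 0 <= m2 by rewrite ler0n.
set q := m2 / (1 + a2).
have hm2q : m2 = (1 + a2) * q by rewrite /q mulrC divfK // gt_eqF.
have hq0 : 0 <= q by rewrite /q divr_ge0 // ltW.
have H1' : (1 + a1) * D * m1 + D * q <= r * n.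
  by rewrite /q mulrA [D * m2 / _]mulrAC.
rewrite -/D; split.
  rewrite -/q.
  have -> : n + (1 + a2) * n / D = (r * n) / D.
    by rewrite /D; field; rewrite -/D gt_eqF.
  by rewrite ler_pdivlMr //; nra.
move=> hcov ha1p.
rewrite hm2q in H2 hcov.
have Hq : D * q <= r * n.
  have : (1 + a2) * (D * q) <= (1 + a2) * (r * n) by nra.
  by rewrite ler_pM2l.
have Ha2 : a2 * (D * q) <= a2 * (r * n) by rewrite ler_wpM2l.
have Hcov : D * ((1 - tau) * n) <= D * (m1 + (1 + a2) * q) by rewrite ler_wpM2l // ltW.
have hn : 0 <= n by rewrite ler0n.
have hr0 : 0 <= r by lra.
have key2 : a1 * m1 * D <= tau * n * D + (1 + a2) * (1 + a2 * r) * n.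
  have : 0 <= a2 * a2 * r * n by rewrite !mulr_ge0.
  rewrite /D in H1' Hq Ha2 Hcov *; nra.
have -> : m1 = (a1 * m1 * D) / D / a1.
  by field; rewrite !gt_eqF.
rewrite ler_pdivrMr // ler_pdivrMr //.
apply: (le_trans key2); rewrite le_eqVlt; apply/orP; left; apply/eqP; field; rewrite !gt_eqF //.
Qed.
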